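(* Let $\mathcal{C}$ be a permutation class. If there exists a partial multiplication matrix $M$ whose row-column graph is a cycle such that $\mathcal{C}$ contains $M$-coils of arbitrarily large length, then $\mathcal{C}$ is not labelled well quasi-ordered.
   Context: Permutations are identified with their plots; $\sigma\le\pi$ if $\pi$ has a subsequence order-isomorphic to $\sigma$; a permutation class is a containment-closed set. A gridding matrix has entries in $\{0,1,-1\}$; an $m\times n$ one has $m$ columns, $n$ rows, $M_{ij}$ in column $i$ from the left and row $j$ from the bottom. An $M$-gridding of a permutation $\pi$ of length $L$ is a choice of vertical lines $\tfrac12=v_0\le\dots\le v_m=L+\tfrac12$ and horizontal lines $\tfrac12=h_0\le\dots\le h_n=L+\tfrac12$, not through points of $\pi$, such that in each cell $C_{ij}=\{v_{i-1}<x<v_i,\ h_{j-1}<y<h_j\}$ the points of $\pi$ are absent if $M_{ij}=0$, increasing if $M_{ij}=1$, decreasing if $M_{ij}=-1$; this gives an $M$-gridded permutation $\pi^\#$. The row-column graph $G_M$ is the bipartite graph on $\{1,\dots,m\}\cup\{1',\dots,n'\}$ with edge $ij'$ iff $M_{ij}\neq 0$. $M$ is a partial multiplication matrix if there are fixed $c_1,\dots,c_m,r_1,\dots,r_n\in\{\pm1\}$ with $M_{ij}=c_ir_j$ for each non-zero entry. Column $i$ is oriented left-to-right if $c_i=1$, right-to-left otherwise; row $j$ bottom-to-top if $r_j=1$, top-to-bottom otherwise. The orientation digraph $D_{\pi^\#}$ has the points of $\pi^\#$ as vertices, with $x\to y$ whenever $x,y$ lie in a common column of cells and $x$ precedes $y$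 in that column's orientation, or lie in a common row of cells and $x$ precedes $y$ in that row's orientation. Let $\ell$ be the length of the cycle $G_M$. A gridded $M$-coil is an $M$-gridded permutation of length $n>\ell$ with an ordering $v_1,\dots,v_n$ of its points and a labelling of the $\ell$ non-zero cells by $1,\dots,\ell$ such that (C1) $v_i$ lies in cell $i\bmod\ell$ (residues in $\{1,\dots,\ell\}$); (C2) $v_{i-1}\to v_i$ for $1<i\le n$; (C3) $v_i\to v_{i-\ell-1}$ for $\ell+1<i\le n$; (C4) $v_{\ell+1}\to v_1$. An $M$-coil is a permutation having an $M$-gridding which is a gridded $M$-coil; its length is its number of points. A quasi-order is wqo if every infinite sequence has $x_i\le x_j$ for some $i<j$. For a quasi-order $L$, an $L$-labelled permutation is a permutation with a map from its points to $L$; $(\sigma,\ell_\sigma)\le(\pi,\ell_\pi)$ if some embedding of $\sigma$ in $\pi$ maps each point to one whose label is $\ge$ its own. A set of permutations is labelled well quasi-ordered if its set of $L$-labelled elements is wqo for every wqo $L$. *)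

(* Defs.v *)
From mathcomp Require Import all_boot all_order all_algebra all_fingroup.
Set Implicit Arguments. Unset Strict Implicit. Unset Printing Implicit Defensive.
Import GRing.Theory Num.Theory.
Local Open Scope ring_scope.

(* A permutation of length L is a permutation of 'I_L; the point with
   (0-based) position x has (0-based) value p x. *)
Record permutation := Perm { plen : nat; pperm : 'S_plen }.

(* value of the point at position x (x < plen p); identity outside range *)
Definition pval (p : permutation) (x : nat) : nat :=
  if insub x is Some i then val (pperm p i) else x.

Definition embeds (s p : permutation) (f : 'I_(plen s) -> 'I_(plen p)) : Prop :=
  (forall i j : 'I_(plen s), (i < j)%N -> (f i < f j)%N) /\
  (forall i j : 'I_(plen s), (pperm s i < pperm s j)%N = (pperm p (f i) < pperm p (f j))%N).

Definition contained (s p : permutation) : Prop :=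
  exists f : 'I_(plen s) -> 'I_(plen p), embeds f.

Definition perm_class (C : permutation -> Prop) : Prop :=
  forall s p, contained s p -> C p -> C s.

Definition quasi_order (T : Type) (le : T -> T -> Prop) : Prop :=
  (forall x, le x x) /\ (forall x y z, le x y -> le y z -> le x z).

Definition wqo_on (T : Type) (le : T -> T -> Prop) (A : T -> Prop) : Prop :=
  forall x : nat -> T, (forall k, A (x k)) ->
    exists i j : nat, (i < j)%N /\ le (x i) (x j).

Definition wqo (T : Type) (le : T -> T -> Prop) : Prop :=
  quasi_order le /\ wqo_on le (fun _ => True).

Record lperm (L : Type) := LPerm { lp : permutation; llab : 'I_(plen lp) -> L }.
Arguments llab {L} l _.

Definition lperm_le (L : Type) (leL : L -> L -> Prop) (s p : lperm L) : Prop :=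
  exists f : 'I_(plen (lp s)) -> 'I_(plen (lp p)),
    embeds f /\ forall i, leL (llab s i) (llab p (f i)).

Definition labelled_wqo (C : permutation -> Prop) : Prop :=
  forall (L : Type) (leL : L -> L -> Prop), wqo leL ->
    wqo_on (lperm_le leL) (fun q : lperm L => C (lp q)).

(* M i j : entry in column i (from the left) and row j (from the bottom), 0-based *)
Definition gridding_matrix (m n : nat) (M : 'I_m -> 'I_n -> int) : Prop :=
  forall i j, M i j = 0 \/ M i j = 1 \/ M i j = -1.

Definition pmm_with (m n : nat) (M : 'I_m -> 'I_n -> int)
  (c : 'I_m -> int) (r : 'I_n -> int) : Prop :=
  (forall i, c i = 1 \/ c i = -1) /\ (forall j, r j = 1 \/ r j = -1) /\
  (forall i j, M i j != 0 -> M i j = c i * r j).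

(* row-column graph on columns (inl) and rows (inr) *)
Definition rc_edge (m n : nat) (M : 'I_m -> 'I_n -> int) (x y : 'I_m + 'I_n) : bool :=
  match x, y with
  | inl i, inr j => M i j != 0
  | inr j, inl i => M i j != 0
  | _, _ => false
  end.

Definition rc_is_cycle (m n : nat) (M : 'I_m -> 'I_n -> int) : Prop :=
  exists s : seq ('I_m + 'I_n),
    [/\ uniq s, (forall v, v \in s), (3 <= size s)%N &
        forall x y, rc_edge M x y = (y == next s x) || (x == next s y)].

(* number of non-zero cells (= length of the cycle G_M) *)
Definition nz_cells (m n : nat) (M : 'I_m -> 'I_n -> int) : nat :=
  #|[pred ij : 'I_m * 'I_n | M ij.1 ij.2 != 0]|.

(* vertical line k lies at vl k + 1/2, horizontal line k at hl k + 1/2 *)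
Definition in_col (vl : nat -> nat) (i x : nat) : bool := (vl i <= x < vl i.+1)%N.

Definition in_cell (p : permutation) (vl hl : nat -> nat) (i j x : nat) : bool :=
  in_col vl i x && in_col hl j (pval p x).

Definition is_gridding (m n : nat) (M : 'I_m -> 'I_n -> int)
  (p : permutation) (vl hl : nat -> nat) : Prop :=
  [/\ vl 0%N = 0%N, vl m = plen p & (forall k, (k < m)%N -> (vl k <= vl k.+1)%N)] /\
  [/\ hl 0%N = 0%N, hl n = plen p & (forall k, (k < n)%N -> (hl k <= hl k.+1)%N)] /\
      forall (i : 'I_m) (j : 'I_n) x y, (x < plen p)%N -> (y < plen p)%N ->
        in_cell p vl hl i j x -> in_cell p vl hl i j y ->
        [/\ M i j != 0,
            M i j = 1 -> (x < y)%N -> (pval p x < pval p y)%N &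
            M i j = -1 -> (x < y)%N -> (pval p y < pval p x)%N].

Definition orient (m n : nat) (c : 'I_m -> int) (r : 'I_n -> int)
  (p : permutation) (vl hl : nat -> nat) (x y : nat) : Prop :=
  (exists i : 'I_m, [/\ in_col vl i x, in_col vl i y &
      if c i == 1 then (x < y)%N else (y < x)%N]) \/
  (exists j : 'I_n, [/\ in_col hl j (pval p x), in_col hl j (pval p y) &
      if r j == 1 then (pval p x < pval p y)%N else (pval p y < pval p x)%N]).

(* p is an M-coil (w.r.t. the orientations c, r); points are indexed
   0-based: v k is the (k+1)-st point of the ordering, lab i j + 1 the
   label of cell (i,j) *)
Definition is_coil (m n : nat) (M : 'I_m -> 'I_n -> int)
  (c : 'I_m -> int) (r : 'I_n -> int) (p : permutation) : Prop :=
  let l := nz_cells M in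
  let L := plen p in
  (l < L)%N /\
  exists (vl hl : nat -> nat) (v : nat -> nat) (lab : 'I_m -> 'I_n -> nat),
  [/\ is_gridding M p vl hl,
      (forall k, (k < L)%N -> (v k < L)%N) &
      (forall k k', (k < L)%N -> (k' < L)%N -> v k = v k' -> k = k')] /\
  [/\
      (forall i j, M i j != 0 -> (lab i j < l)%N) &
      (forall i j i' j', M i j != 0 -> M i' j' != 0 ->
          lab i j = lab i' j' -> i = i' /\ j = j')] /\
  [/\
      (forall k, (k < L)%N -> exists (i : 'I_m) (j : 'I_n),
          in_cell p vl hl i j (v k) /\ lab i j = (k %% l)%N),
      (forall k, (0 < k < L)%N -> orient c r p vl hl (v k.-1) (v k)),
      (forall k, (l < k < L)%N -> orient c r p vl hl (v k) (v (k - l.+1)%N)) &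
      orient c r p vl hl (v l) (v 0%N)].

(* Main.v *)
Require Import Defs.
From mathcomp Require Import all_boot all_order all_algebra all_fingroup zify.
Import GRing.Theory Num.Theory.
Set Implicit Arguments. Unset Strict Implicit. Unset Printing Implicit Defensive.

Lemma mono_le (vl : nat -> nat) (K : nat) :
  (forall k, (k < K)%N -> (vl k <= vl k.+1)%N) ->
  forall a b, (a <= b)%N -> (b <= K)%N -> (vl a <= vl b)%N.
Proof.
move=> H a b; elim: b => [|b IH]; first by rewrite leqn0 => /eqP ->.
rewrite leq_eqVlt => /orP [/eqP -> //|]; rewrite ltnS => hab hb.
exact: leq_trans (IH hab (ltnW hb)) (H _ hb).
Qed.

Lemma in_col_uniq (vl : nat -> nat) K (i i' x : nat) :
  (forall k, (k < K)%N -> (vl k <= vl k.+1)%N) -> (i < K)%N -> (i' < K)%N ->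
  in_col vl i x -> in_col vl i' x -> i = i'.
Proof.
move=> H hi hi'; rewrite /in_col => /andP[a1 a2] /andP[b1 b2].
case: (ltngtP i i') => // h.
- have := mono_le H h (ltnW hi'); lia.
- have := mono_le H h (ltnW hi); lia.
Qed.

Section S.
Variables (m n : nat) (M : 'I_m -> 'I_n -> int) (c : 'I_m -> int) (r : 'I_n -> int).
Hypothesis Hpmm : pmm_with M c r.

Definition colLt (i : 'I_m) (x y : nat) := if c i == 1%R then (x < y)%N else (y < x)%N.
Definition rowLt (p : permutation) (j : 'I_n) x y :=
  if r j == 1%R then (Defs.pval p x < Defs.pval p y)%N else (Defs.pval p y < Defs.pval p x)%N.

Lemma colLt_trans i x y z : colLt i x y -> colLt i y z -> colLt i x z.
Proof. rewrite /colLt; case: ifP => _; lia. Qed.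
Lemma colLt_irr i x : ~~ colLt i x x.
Proof. rewrite /colLt; case: ifP => _; lia. Qed.
Lemma rowLt_trans p j x y z : rowLt p j x y -> rowLt p j y z -> rowLt p j x z.
Proof. rewrite /rowLt; case: ifP => _; lia. Qed.

Section G.
Variables (p : permutation) (vl hl : nat -> nat).
Hypothesis Hg : is_gridding M p vl hl.

Lemma col_uniq (i i' : 'I_m) x : in_col vl i x -> in_col vl i' x -> i = i'.
Proof.
case: Hg => [[_ _ H] _] h1 h2; apply: val_inj.
exact: (in_col_uniq H (ltn_ord i) (ltn_ord i') h1 h2).
Qed.
Lemma row_uniq (j j' : 'I_n) x : in_col hl j x -> in_col hl j' x -> j = j'.
Proof.
case: Hg => [_ [[_ _ H] _]] h1 h2; apply: val_inj.
exact: (in_col_uniq H (ltn_ord j) (ltn_ord j') h1 h2).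
Qed.

Lemma cell_nz (i : 'I_m) (j : 'I_n) x : (x < plen p)%N -> in_cell p vl hl i j x -> M i j != 0.
Proof. case: Hg => _ [_ G] hx cx; by case: (G i j x x hx hx cx cx). Qed.

Lemma agree1 (i : 'I_m) (j : 'I_n) x y : (x < plen p)%N -> (y < plen p)%N ->
  in_cell p vl hl i j x -> in_cell p vl hl i j y -> colLt i x y -> rowLt p j x y.
Proof.
case: Hg => _ [_ G] hx hy cx cy.
have [nz Hi Hd] := G i j x y hx hy cx cy.
have [_ Hi' Hd'] := G i j y x hy hx cy cx.
case: Hpmm => Hc [Hr Hm]; have EM := Hm i j nz.
rewrite /colLt /rowLt.
case: (Hc i) => E1; case: (Hr j) => E2; rewrite E1 E2 in EM *; rewrite ?eqxx /=.
- by apply: Hi.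
- by apply: Hd.
- by apply: Hd'.
- by apply: Hi'.
Qed.

Lemma agree2 (i : 'I_m) (j : 'I_n) x y : (x < plen p)%N -> (y < plen p)%N ->
  in_cell p vl hl i j x -> in_cell p vl hl i j y -> rowLt p j x y -> colLt i x y.
Proof.
move=> hx hy cx cy h.
have [E|ne] := eqVneq x y.
  by move: h; rewrite E /rowLt; case: ifP => _; rewrite ltnn.
case: Hpmm => Hc _.
have h2 : ~~ colLt i x y -> colLt i y x.
  by rewrite /colLt; case: ifP => _; move: ne; rewrite neq_ltn; lia.
apply/negPn/negP => /h2 h3.
have := agree1 hy hx cy cx h3.
move: h; rewrite /rowLt; case: ifP => _; lia.
Qed.

Lemma O_cell (i : 'I_m) (j : 'I_n) x y : (x < plen p)%N -> (y < plen p)%N ->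
  in_cell p vl hl i j x -> in_cell p vl hl i j y ->
  orient c r p vl hl x y <-> colLt i x y.
Proof.
move=> hx hy cx cy; split.
- case=> [[i' [a b h]]|[j' [a b h]]].
  + move/andP: cx => [cx _]; by rewrite -(col_uniq a cx).
  + apply: (agree2 hx hy cx cy); move/andP: cx => [_ cx].
    by rewrite /rowLt -(row_uniq a cx).
- move=> h; left; exists i; move/andP: cx => [cx _]; move/andP: cy => [cy _].
  by split.
Qed.

Lemma L1 (i : 'I_m) (j : 'I_n) a b d : (a < plen p)%N -> (b < plen p)%N -> (d < plen p)%N ->
  in_cell p vl hl i j a -> in_cell p vl hl i j d -> ~ in_cell p vl hl i j b ->
  orient c r p vl hl a b -> orient c r p vl hl b d -> colLt i a d.
Proof.
move=> ha hb hd ca cd nb.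
case/andP: (ca) => ca1 ca2; case/andP: (cd) => cd1 cd2.
case=> [[i' [x1 x2 h1]]|[j' [x1 x2 h1]]];
  case=> [[i'' [y1 y2 h2]]|[j'' [y1 y2 h2]]].
- have e1 := col_uniq x1 ca1; have e2 := col_uniq y2 cd1; subst.
  exact: colLt_trans h1 h2.
- have e1 := col_uniq x1 ca1; have e2 := row_uniq y2 cd2; subst.
  by case: nb; rewrite /in_cell x2 y1.
- have e1 := row_uniq x1 ca2; have e2 := col_uniq y2 cd1; subst.
  by case: nb; rewrite /in_cell x2 y1.
- have e1 := row_uniq x1 ca2; have e2 := row_uniq y2 cd2; subst.
  apply: (agree2 ha hd ca cd); exact: rowLt_trans h1 h2.
Qed.
End G.
End S.
Section Coil.
Variables (m n : nat) (M : 'I_m -> 'I_n -> int) (c : 'I_m -> int) (r : 'I_n -> int).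
Hypothesis Hpmm : pmm_with M c r.
Variables (p : permutation) (vl hl v : nat -> nat) (lab : 'I_m -> 'I_n -> nat).
Local Notation l := (nz_cells M).
Local Notation L := (plen p).
Hypotheses (Hl : (l < L)%N) (Hg : is_gridding M p vl hl)
  (Hv : forall k, (k < L)%N -> (v k < L)%N)
  (Hvi : forall k k', (k < L)%N -> (k' < L)%N -> v k = v k' -> k = k')
  (Hlab1 : forall i j, M i j != 0 -> (lab i j < l)%N)
  (Hlab2 : forall i j i' j', M i j != 0 -> M i' j' != 0 ->
          lab i j = lab i' j' -> i = i' /\ j = j')
  (C1 : forall k, (k < L)%N -> exists (i : 'I_m) (j : 'I_n),
          in_cell p vl hl i j (v k) /\ lab i j = (k %% l)%N)
  (C2 : forall k, (0 < k < L)%N -> orient c r p vl hl (v k.-1) (v k))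
  (C3 : forall k, (l < k < L)%N -> orient c r p vl hl (v k) (v (k - l.+1)%N))
  (C4 : orient c r p vl hl (v l) (v 0%N)).

Lemma lab_of g (i : 'I_m) (j : 'I_n) : (g < L)%N -> in_cell p vl hl i j (v g) -> lab i j = (g %% l)%N.
Proof.
move=> hg ci; have [i' [j' [ci' E]]] := C1 hg.
case/andP: ci => a b; case/andP: ci' => a' b'.
by rewrite (col_uniq Hg a a') (row_uniq Hg b b').
Qed.

Lemma same_cell g h (i : 'I_m) (j : 'I_n) : (g < L)%N -> (h < L)%N -> (g %% l = h %% l)%N ->
  in_cell p vl hl i j (v g) -> in_cell p vl hl i j (v h).
Proof.
move=> hg hh E ci; have [i' [j' [ci' E']]] := C1 hh.
have e : lab i j = lab i' j' by rewrite E' (lab_of hg ci).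
by case: (Hlab2 (cell_nz Hg (Hv hg) ci) (cell_nz Hg (Hv hh) ci') e) => -> ->.
Qed.

Lemma l_ge2 : (2 <= l)%N.
Proof.
have h0 : (0 < L)%N by lia.
have [i [j [ci E]]] := C1 h0.
have hpos : (0 < l)%N by have := Hlab1 (cell_nz Hg (Hv h0) ci); lia.
case/boolP: (l == 1%N) => [/eqP El|]; last by lia.
have h1 : (1 < L)%N by lia.
have ci1 : in_cell p vl hl i j (v 1) by apply: (same_cell h0 h1) => //; rewrite El.
have := C4; rewrite El => /(O_cell Hpmm Hg (Hv h1) (Hv h0) ci1 ci) A.
have := C2 (k := 1) ltac:(lia) => /= /(O_cell Hpmm Hg (Hv h0) (Hv h1) ci ci1) B.
by have := colLt_irr c i (v 1); rewrite (colLt_trans A B).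
Qed.

Lemma res_neq k : (0 < k)%N -> (k.-1 %% l)%N <> (k %% l)%N.
Proof. move=> hk E; have hl2 := l_ge2.
have : (k.-1 + 0 == k.-1 + 1 %[mod l])%N by rewrite addn0 addn1 prednK // E.
by rewrite eqn_modDl mod0n modn_small.
Qed.

Lemma Fbase t (i : 'I_m) (j : 'I_n) : (t + l < L)%N -> in_cell p vl hl i j (v t) ->
  colLt c i (v (t + l)) (v t).
Proof.
move=> h ci.
have ht : (t < L)%N by lia.
have ci2 : in_cell p vl hl i j (v (t + l)) by apply: (same_cell ht h) => //; rewrite modnDr.
case: t => [|t] in h ht ci ci2 *.
  by rewrite add0n in ci2 *; apply/(O_cell Hpmm Hg (Hv h) (Hv ht) ci2 ci).
have ht' : (t < L)%N by lia.
have A := C3 (k := t.+1 + l) ltac:(lia).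
have EE : (t.+1 + l - l.+1 = t)%N by lia.
rewrite EE in A.
have B := C2 (k := t.+1) ltac:(lia).
apply: (L1 Hpmm Hg (Hv h) (Hv ht') (Hv ht) ci2 ci _ A B).
move=> ci'; apply: (@res_neq t.+1) => //.
by rewrite -(lab_of ht' ci') (lab_of ht ci).
Qed.

Lemma F1 a t (i : 'I_m) (j : 'I_n) : (t + a.+1 * l < L)%N -> in_cell p vl hl i j (v t) ->
  colLt c i (v (t + a.+1 * l)) (v t).
Proof.
elim: a => [|a IH] h ci; first by move: h; rewrite mul1n => h; exact: Fbase h ci.
have E : (t + a.+2 * l = (t + a.+1 * l) + l)%N by rewrite (mulSn a.+1); lia.
rewrite E in h *.
have h1 : (t + a.+1 * l < L)%N by lia.
have ht : (t < L)%N by lia.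
have ci1 : in_cell p vl hl i j (v (t + a.+1 * l)).
  by apply: (same_cell ht h1) => //; rewrite addnC modnMDl.
exact: colLt_trans (Fbase h ci1) (IH h1 ci).
Qed.

Lemma gap k G : (0 < k)%N -> (G < L)%N -> (G %% l = k %% l)%N -> (k < G)%N ->
  orient c r p vl hl (v k.-1) (v G) -> False.
Proof.
move=> hk hG E kG O1.
have hl2 := l_ge2.
have : (l %| G - k)%N by rewrite -eqn_mod_dvd ?(ltnW kG) // E.
move/dvdnP => [b Eb].
case: b Eb => [|b] Eb; first by lia.
rewrite mulSn in Eb.
have EG : (G = k + l + b * l)%N by lia.
have A := C3 (k := G) ltac:(lia).
have EE : (G - l.+1 = k.-1 + b * l)%N by lia.
rewrite EE in A.
have hk1 : (k.-1 < L)%N by lia.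
have [i [j [ci _]]] := C1 hk1.
have hT : (k.-1 + b * l < L)%N by lia.
have ciT : in_cell p vl hl i j (v (k.-1 + b * l)).
  by apply: (same_cell hk1 hT) => //; rewrite addnC modnMDl.
have nb : ~ in_cell p vl hl i j (v G).
  by move=> ciG; apply: (res_neq hk); rewrite -(lab_of hk1 ci) (lab_of hG ciG).
have X := L1 Hpmm Hg (Hv hk1) (Hv hG) (Hv hT) ci ciT nb O1 A.
clear EE; case: b => [|b] in Eb EG A hT ciT X *.
  by rewrite mul0n addn0 in X; have := colLt_irr c i (v k.-1); rewrite X.
have Y := F1 hT ci.
by have := colLt_irr c i (v k.-1); rewrite (colLt_trans X Y).
Qed.
End Coil.
Lemma pick_uniq (T : finType) (P : pred T) a : P a -> (forall b, P b -> b = a) -> [pick b | P b] = Some a.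
Proof. move=> Pa U; case: pickP => [b Pb|h]; first by rewrite (U b Pb). by rewrite h in Pa. Qed.
Lemma pick_some (T : finType) (P : pred T) a : [pick b | P b] = Some a -> P a.
Proof. by case: pickP => // b Pb [<-]. Qed.
Lemma pvalE (p : permutation) (x : 'I_(plen p)) : Defs.pval p x = pperm p x.
Proof. by rewrite /Defs.pval valK. Qed.

Section Emb.
Variables (m n : nat) (M : 'I_m -> 'I_n -> int) (c : 'I_m -> int) (r : 'I_n -> int).
Hypothesis Hpmm : pmm_with M c r.

Record CD := mkCD { cdp : permutation; cdvl : nat -> nat; cdhl : nat -> nat;
  cdv : nat -> nat; cdlab : 'I_m -> 'I_n -> nat }.

Definition coilP (d : CD) : Prop :=
  let p := cdp d in let vl := cdvl d in let hl := cdhl d in let v := cdv d in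
  let lab := cdlab d in
  let l := nz_cells M in
  let L := plen p in
  (l < L)%N /\
  [/\ is_gridding M p vl hl,
      (forall k, (k < L)%N -> (v k < L)%N) &
      (forall k k', (k < L)%N -> (k' < L)%N -> v k = v k' -> k = k')] /\
  [/\ (forall i j, M i j != 0 -> (lab i j < l)%N) &
      (forall i j i' j', M i j != 0 -> M i' j' != 0 ->
          lab i j = lab i' j' -> i = i' /\ j = j')] /\
  [/\
      (forall k, (k < L)%N -> exists (i : 'I_m) (j : 'I_n),
          in_cell p vl hl i j (v k) /\ lab i j = (k %% l)%N),
      (forall k, (0 < k < L)%N -> orient c r p vl hl (v k.-1) (v k)),
      (forall k, (l < k < L)%N -> orient c r p vl hl (v k) (v (k - l.+1)%N)) &
      orient c r p vl hl (v l) (v 0%N)].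

Lemma coilP_of p : is_coil M c r p -> exists d, cdp d = p /\ coilP d.
Proof.
case=> Hl [vl [hl [v [lab H]]]]; exists (mkCD p vl hl v lab); split; first by [].
exact: (conj Hl H).
Qed.

Definition LabT := (option 'I_m * option 'I_n * option 'I_(nz_cells M).+1 * bool * bool)%type.

Definition label (d : CD) (x : 'I_(plen (cdp d))) : LabT :=
  let p := cdp d in
  let pk := [pick k : 'I_(plen p) | cdv d k == x] in
  ([pick i : 'I_m | in_col (cdvl d) i x],
   [pick j : 'I_n | in_col (cdhl d) j (Defs.pval p x)],
   omap (fun k : 'I_(plen p) => (inord (k %% nz_cells M) : 'I_(nz_cells M).+1)) pk,
   (if pk is Some k then (k == 0 :> nat) else false),
   (if pk is Some k then (k == (plen p).-1 :> nat) else false)).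

Lemma emb (ds dt : CD) : coilP ds -> coilP dt -> (plen (cdp ds) < plen (cdp dt))%N ->
  forall f : 'I_(plen (cdp ds)) -> 'I_(plen (cdp dt)), embeds f ->
  (forall x, @label ds x = @label dt (f x)) -> False.
Proof.
move=> Hs Ht Hlen f [fmono fval] Hlab.
move: Hs Ht Hlab; rewrite /coilP /label /=.
set ps := cdp ds; set vls := cdvl ds; set hls := cdhl ds; set vs := cdv ds.
set pt := cdp dt; set vlt := cdvl dt; set hlt := cdhl dt; set vt := cdv dt; set labt := cdlab dt.
move=> [Hls [[Hgs Hvs Hvis] [_ [_ C2s _ _]]]].
move=> [Hlt [[Hgt Hvt Hvit] [[Hlab1t Hlab2t] [C1t C2t C3t C4t]]]].
move=> Hlab.
set l := nz_cells M in Hlab Hls Hlt Hlab1t Hlab2t C1t C3t C4t *.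
set Ls := plen ps in Hlab Hls Hvs Hvis C2s Hlen fmono fval *.
set Lt := plen pt in Hlab Hlt Hvt Hvit C1t C2t C3t Hlen fmono fval *.
have hl2 := l_ge2 Hpmm Hlt Hgt Hvt Hlab1t Hlab2t C1t C2t C4t.
have GAP := gap Hpmm Hlt Hgt Hvt Hlab1t Hlab2t C1t C2t C3t C4t.
have finj : forall x y, val (f x) = val (f y) -> x = y.
  move=> x y E; case: (ltngtP x y) => h; last by apply: val_inj.
  - by have := fmono _ _ h; rewrite E ltnn.
  - by have := fmono _ _ h; rewrite E ltnn.
have fle : forall x y, (val x < val y)%N = (val (f x) < val (f y))%N.
  move=> x y; case: (ltngtP x y) => h.
  - by rewrite (fmono _ _ h).
  - by have := fmono _ _ h; rewrite ltnNge => /negbTE; rewrite leq_eqVlt => /norP [_ /negbTE ->].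
  - by rewrite (val_inj h) !ltnn.
have pres : forall x y : 'I_Ls, orient c r ps vls hls x y ->
    orient c r pt vlt hlt (f x) (f y).
  move=> x y [[i [cx cy h]]|[j [cx cy h]]].
  - left; exists i; split.
    + move: (Hlab x) => [= e1 _ _ _ _]; move: e1.
      case: pickP => [i0 h0|h0]; last by rewrite h0 in cx.
      by rewrite (col_uniq Hgs h0 cx) => /esym /pick_some.
    + move: (Hlab y) => [= e1 _ _ _ _]; move: e1.
      case: pickP => [i0 h0|h0]; last by rewrite h0 in cy.
      by rewrite (col_uniq Hgs h0 cy) => /esym /pick_some.
    + by move: h; rewrite /colLt; case: ifP => _; rewrite !fle.
  - right; exists j; split.
    + move: (Hlab x) => [= _ e1 _ _ _]; move: e1.
      case: pickP => [i0 h0|h0]; last by rewrite h0 in cx.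
      by rewrite (row_uniq Hgs h0 cx) => /esym /pick_some.
    + move: (Hlab y) => [= _ e1 _ _ _]; move: e1.
      case: pickP => [i0 h0|h0]; last by rewrite h0 in cy.
      by rewrite (row_uniq Hgs h0 cy) => /esym /pick_some.
    + by move: h; rewrite !pvalE; case: ifP => _; rewrite fval.
have lpos : (0 < l)%N by lia.
have img : forall k (hk : (k < Ls)%N), exists g, [/\ (g < Lt)%N,
    vt g = f (Ordinal (Hvs k hk)), (g %% l = k %% l)%N, (g == 0%N) = (k == 0%N) &
    (g == Lt.-1) = (k == Ls.-1)].
  move=> k hk; set X := Ordinal (Hvs k hk).
  move: (Hlab X) => [= _ _ e3 e4 e5].
  have ps1 : [pick k0 : 'I_Ls | vs k0 == X] = Some (Ordinal hk).
    apply: pick_uniq => [|b /eqP hb]; first by rewrite /= eqxx.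
    by apply: val_inj; apply: Hvis hb.
  rewrite ps1 /= in e3 e4 e5.
  move: e3 e4 e5; case: pickP => [g /eqP hg|_] /=; last by case.
move=> [e3] e4 e5.
  exists g; split => //.
  - have := congr1 (@nat_of_ord _) e3.
    rewrite inordK; last by rewrite ltnS ltnW // ltn_pmod.
    rewrite inordK; last by rewrite ltnS ltnW // ltn_pmod.
    by move=> ->.
have main : forall k (hk : (k < Ls)%N), nat_of_ord (f (Ordinal (Hvs k hk))) = vt k.
  elim/ltn_ind => k IH hk.
  have [g [hg eg em e0 eL]] := img k hk.
  case: (ltngtP g k) => h.
  - exfalso; have hg' : (g < Ls)%N by lia.
    have := IH g h hg'; rewrite eg => /finj /(congr1 val) /= /Hvis.
    by move=> /(_ hg' hk) E; rewrite E ltnn in h.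
  - exfalso.
    have k0 : (0 < k)%N by case: k {IH hk em eg eL} e0 h => // /= /eqP ->.
    have hk1 : (k.-1 < Ls)%N by lia.
    have O := pres (Ordinal (Hvs k.-1 hk1)) (Ordinal (Hvs k hk)) (C2s k ltac:(lia)).
    rewrite IH /= in O; last by lia.
    rewrite -eg in O.
    exact: (GAP k g k0 hg em h O).
  - by move: eg; rewrite h => /esym.
have Ls0 : (0 < Ls)%N by lia.
have hk : (Ls.-1 < Ls)%N by lia.
have [g [hg eg em e0 eL]] := img _ hk.
have := main _ hk; rewrite -eg => /Hvit E.
have E' := E hg ltac:(lia).
move: eL; rewrite E' eqxx => /eqP; lia.
Qed.
End Emb.
From Stdlib Require Classical_Prop IndefiniteDescription.

Lemma pigeon (T : finType) (x : nat -> T) : exists i j, (i < j)%N /\ x i = x j.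
Proof.
apply: Classical_Prop.NNPP => Hn.
pose h (i : 'I_#|T|.+1) := x i.
have hi : injective h.
  move=> a b E; case: (ltngtP a b) => hab; last by apply: val_inj.
  - by case: Hn; exists a, b.
  - by case: Hn; exists b, a.
by have := @leq_card _ _ h hi; rewrite card_ord ltnn.
Qed.

Local Open Scope ring_scope.

Theorem proposition4p12 (C : permutation -> Prop) :
  perm_class C ->
  forall (m n : nat) (M : 'I_m -> 'I_n -> int) (c : 'I_m -> int) (r : 'I_n -> int),
    gridding_matrix M -> pmm_with M c r -> rc_is_cycle M ->
    (forall N : nat, exists p, C p /\ (N <= plen p)%N /\ is_coil M c r p) ->
    ~ labelled_wqo C.
Proof.
move=> _ m n M c r _ Hpmm _ H Hw.
have H2 : forall N, exists d : CD m n, C (cdp d) /\ (N <= plen (cdp d))%N /\ coilP M c r d.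
  move=> N; have [p [Cp [hN hc]]] := H N; have [d [Ed hd]] := coilP_of hc.
  by exists d; rewrite Ed.
pose F N := proj1_sig (IndefiniteDescription.constructive_indefinite_description _ (H2 N)).
have FP N : C (cdp (F N)) /\ (N <= plen (cdp (F N)))%N /\ coilP M c r (F N).
  exact: (proj2_sig (IndefiniteDescription.constructive_indefinite_description _ (H2 N))).
pose D := fix D k := if k is k'.+1 then F (plen (cdp (D k'))).+1 else F 0%N.
have DP k : C (cdp (D k)) /\ coilP M c r (D k).
  case: k => [|k]; first exact: (let: conj a (conj _ b) := FP 0%N in conj a b).
  exact: (let: conj a (conj _ b) := FP _ in conj a b).
have Dinc : forall i j, (i < j)%N -> (plen (cdp (D i)) < plen (cdp (D j)))%N.
  apply: (@homo_ltn _ (fun k => plen (cdp (D k))) (fun a b => a < b)%N); first by move=> ? ? ?; apply: ltn_trans.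
  by move=> k /=; have [_ [? _]] := FP (plen (cdp (D k))).+1.
pose x k := @LPerm (LabT M) (cdp (D k)) (@label m n M (D k)).
have Wq : wqo (fun a b : LabT M => a = b).
  split; first by split => // ? ? ? -> ->.
  by move=> y _; exact: pigeon.
have [i [j [hij [f [Hf Hl]]]]] := Hw _ _ Wq x (fun k => proj1 (DP k)).
exact: (emb Hpmm (proj2 (DP i)) (proj2 (DP j)) (Dinc _ _ hij) Hf Hl).
Qed.
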